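(* Let $h:(\mathbb{R}^n,0)\to(\mathbb{R}^n,0)$ be a bi-Lipschitz homeomorphism (germ). Suppose $\gamma_1,\gamma_2\in\mathcal{A}(\mathbb{R}^n,0)$ satisfy $T(\gamma_1)=T(\gamma_2)$. Then for any sequence of points $\{a_m\}\subset h(\gamma_1)$ tending to $0$ with $\lim_{m\to\infty}a_m/\|a_m\|=a\in S^{n-1}$, there is a sequence of points $\{b_m\}\subset h(\gamma_2)$ tending to $0$ with $\lim_{m\to\infty}b_m/\|b_m\|=a$. In particular $D(h(\gamma_1))=D(h(\gamma_2))$.
   Context: A bi-Lipschitz homeomorphism germ is a homeomorphism between neighbourhoods of $0$ fixing $0$ with $K_1|x-y|\le|h(x)-h(y)|\le K_2|x-y|$ for some $0<K_1\le K_2$ near $0$. $\mathcal{A}(\mathbb{R}^n,0)$ is the set of germs of analytic maps $\lambda:[0,\epsilon)\to\mathbb{R}^n$ with $\lambda(0)=0$ and $\lambda(s)\ne0$ for $s>0$; an arc is identified with its image. For such $\lambda$ there is a unique $a\in S^{n-1}$ such that $\lambda$ is tangent at $0$ to the half-line $L(a)=\{ta: t\ge0\}$, and $T(\lambda):=L(a)$. Direction set: $D(X)=\{a\in S^{n-1} : \exists\, \{x_i\}\subset X\setminus\{0\},\ x_i\to 0,\ x_i/\|x_i\|\to a\}$. *)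

(* Defs.v *)
From HB Require Import structures.
From mathcomp Require Import all_boot all_order all_algebra.
From mathcomp Require Import all_classical all_reals all_analysis.
Set Implicit Arguments. Unset Strict Implicit. Unset Printing Implicit Defensive.
Import Order.TTheory GRing.Theory Num.Theory.
Import numFieldNormedType.Exports.
Local Open Scope classical_set_scope.
Local Open Scope ring_scope.

(* Euclidean norm on R^n (the library norm on matrices is the sup norm). *)
Definition enorm {R : realType} {n : nat} (x : 'rV[R]_n) : R :=
  Num.sqrt (\sum_(i < n) x ord0 i ^+ 2).

Definition dir {R : realType} {n : nat} (x : 'rV[R]_n) : 'rV[R]_n :=
  (enorm x)^-1 *: x.

Definition sphere {R : realType} (n : nat) : set 'rV[R]_n :=
  [set a | enorm a = 1].

(* h is (a representative of) a bi-Lipschitz homeomorphism germ at 0: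
   a homeomorphism between open neighbourhoods U, V of 0, fixing 0, and
   bi-Lipschitz (for the Euclidean norm) near 0. *)
Definition bilip_homeo_germ {R : realType} {n : nat}
    (h : 'rV[R]_n -> 'rV[R]_n) : Prop :=
  h 0 = 0 /\
  (exists (U V : set 'rV[R]_n) (g : 'rV[R]_n -> 'rV[R]_n),
      [/\ open U, open V, U 0, V 0 &
      [/\ h @` U = V, {within U, continuous h}, {within V, continuous g},
          (forall x, U x -> g (h x) = x) & (forall y, V y -> h (g y) = y)]]) /\
  (exists (K1 K2 r : R), [/\ 0 < K1, K1 <= K2, 0 < r &
      forall x y, enorm x < r -> enorm y < r ->
        K1 * enorm (x - y) <= enorm (h x - h y) /\
        enorm (h x - h y) <= K2 * enorm (x - y)]).

(* lambda is (a representative of) an element of A(R^n,0): a real analytic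
   map germ [0,eps) -> R^n, given by a convergent power series on [0,eps),
   with lambda(0) = 0 and lambda(s) <> 0 for 0 < s < eps. *)
Definition analytic_arc {R : realType} {n : nat} (lam : R -> 'rV[R]_n) : Prop :=
  exists (eps : R) (c : nat -> 'rV[R]_n),
    [/\ 0 < eps,
        (forall t, 0 <= t < eps ->
           (fun N : nat => \sum_(k < N) (t ^+ k) *: c k) @ \oo --> lam t),
        lam 0 = 0 &
        (forall s, 0 < s < eps -> lam s <> 0)].

(* lambda is tangent at 0 to the half-line L(a) = {t a : t >= 0}:
   lambda(s)/||lambda(s)|| -> a as s -> 0+ ; T(lambda) = L(a). *)
Definition tangent_to {R : realType} {n : nat} (lam : R -> 'rV[R]_n)
    (a : 'rV[R]_n) : Prop :=
  @sphere R n a /\ (fun s => dir (lam s)) @ 0^'+ --> a.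

Definition dirset {R : realType} {n : nat} (X : set 'rV[R]_n) : set 'rV[R]_n :=
  [set a | @sphere R n a /\
     exists x : nat -> 'rV[R]_n,
       [/\ (forall i, X (x i) /\ x i <> 0), x @ \oo --> (0 : 'rV[R]_n)
         & (fun i => dir (x i)) @ \oo --> a]].

(* representative of the set germ h(lambda) : image of [0, d) *)
Definition arc_image {R : realType} {n : nat} (h : 'rV[R]_n -> 'rV[R]_n)
    (lam : R -> 'rV[R]_n) (d : R) : set 'rV[R]_n :=
  [set h (lam t) | t in `[0, d[].

(* Main.v *)
Require Import Defs.
From HB Require Import structures.
From mathcomp Require Import all_boot all_order all_algebra.
From mathcomp Require Import all_classical all_reals all_analysis.
From mathcomp Require Import ring lra.
Import Order.TTheory GRing.Theory Num.Theory.
Import numFieldNormedType.Exports.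
Local Open Scope classical_set_scope.
Local Open Scope ring_scope.
Section Enorm.
Variables (R : realType) (n : nat).
Implicit Types (x y : 'rV[R]_n).

Lemma sumsq_ge0 x : 0 <= \sum_(i < n) x ord0 i ^+ 2.
Proof. by apply: sumr_ge0 => i _; exact: sqr_ge0. Qed.

Lemma enorm_ge0 x : 0 <= enorm x.
Proof. exact: sqrtr_ge0. Qed.

Lemma enorm_sqr x : enorm x ^+ 2 = \sum_(i < n) x ord0 i ^+ 2.
Proof. by rewrite /enorm sqr_sqrtr // sumsq_ge0. Qed.

Lemma enorm0 : enorm (0 : 'rV[R]_n) = 0.
Proof.
rewrite /enorm big1 ?sqrtr0 // => i _; by rewrite mxE expr0n.
Qed.

Lemma enorm_eq0 x : enorm x = 0 -> x = 0.
Proof.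
move=> h; have : \sum_(i < n) x ord0 i ^+ 2 = 0 by rewrite -enorm_sqr h expr0n.
move/eqP; rewrite psumr_eq0; last by move=> i _; exact: sqr_ge0.
move/allP => H; apply/matrixP => i j; rewrite ord1 mxE.
by have /implyP := H j (mem_index_enum _); move/(_ isT); rewrite sqrf_eq0 => /eqP.
Qed.

Lemma enorm_gt0 x : x <> 0 -> 0 < enorm x.
Proof.
move=> x0; rewrite lt_neqAle enorm_ge0 andbT; apply/eqP => h.
by apply: x0; apply: enorm_eq0.
Qed.

Lemma enormZ (k : R) x : enorm (k *: x) = `|k| * enorm x.
Proof.
rewrite /enorm -sqrtr_sqr -sqrtrM ?sqr_ge0 //; congr Num.sqrt.
by rewrite mulr_sumr; apply: eq_bigr => i _; rewrite mxE exprMn.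
Qed.

Lemma enormN x : enorm (- x) = enorm x.
Proof. by rewrite -scaleN1r enormZ normrN normr1 mul1r. Qed.

Lemma enorm_coord x i : `|x ord0 i| <= enorm x.
Proof.
rewrite -(ger0_norm (enorm_ge0 x)) -ler_sqr ?nnegrE // ?normr_ge0 //.
rewrite !real_normK ?num_real // enorm_sqr.
rewrite (bigD1 i) //= lerDl; apply: sumr_ge0 => j _; exact: sqr_ge0.
Qed.

Lemma enorm_dot x y : \sum_(i < n) x ord0 i * y ord0 i <= enorm x * enorm y.
Proof.
have [->|x0] := eqVneq x 0.
  by rewrite enorm0 mul0r big1 // => i _; rewrite mxE mul0r.
have [->|y0] := eqVneq y 0.
  by rewrite enorm0 mulr0 big1 // => i _; rewrite mxE mulr0.
have ex : 0 < enorm x by apply: enorm_gt0; apply/eqP.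
have ey : 0 < enorm y by apply: enorm_gt0; apply/eqP.
set a := enorm x; set b := enorm y.
have key i : x ord0 i * y ord0 i <=
   ((b / a) * x ord0 i ^+ 2 + (a / b) * y ord0 i ^+ 2) / 2.
  rewrite ler_pdivlMr // -subr_ge0.
  have -> : b / a * x ord0 i ^+ 2 + a / b * y ord0 i ^+ 2 - x ord0 i * y ord0 i * 2
     = (a * b)^-1 * (b * x ord0 i - a * y ord0 i) ^+ 2.
    by field; apply/andP; split; rewrite gt_eqF.
  by rewrite mulr_ge0 // ?sqr_ge0 // invr_ge0 mulr_ge0 // ltW.
apply: le_trans (ler_sum _ (fun i _ => key i)) _.
rewrite -mulr_suml big_split /= -!mulr_sumr -!enorm_sqr.
rewrite -/a -/b le_eqVlt; apply/orP; left; apply/eqP; field.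
by apply/andP; split; rewrite gt_eqF.
Qed.

Lemma enormD x y : enorm (x + y) <= enorm x + enorm y.
Proof.
rewrite -(ger0_norm (enorm_ge0 _)) -[X in _ <= X]ger0_norm ?addr_ge0 ?enorm_ge0 //.
rewrite -ler_sqr ?nnegrE ?normr_ge0 // !real_normK ?num_real //.
rewrite enorm_sqr sqrrD !enorm_sqr.
have -> : \sum_(i < n) (x + y) ord0 i ^+ 2 =
   \sum_(i < n) x ord0 i ^+ 2 + (\sum_(i < n) x ord0 i * y ord0 i) *+ 2
   + \sum_(i < n) y ord0 i ^+ 2.
  rewrite -sumrMnl -!big_split /=; apply: eq_bigr => i _; by rewrite mxE sqrrD.
by rewrite lerD2r lerD2l lerMn2r /= enorm_dot.
Qed.

Lemma enormB_ge x y : enorm x - enorm y <= enorm (x - y).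
Proof. by rewrite lerBlDr; apply: le_trans (enormD _ _); rewrite subrK. Qed.

Lemma enorm_dist x y : `|enorm x - enorm y| <= enorm (x - y).
Proof.
rewrite ler_norml enormB_ge andbT lerNl opprB.
by apply: le_trans (enormB_ge _ _) _; rewrite -enormN opprB.
Qed.

Lemma mxnorm_le_enorm x : `|x| <= enorm x.
Proof.
have [/eqP|] := eqVneq `|x| 0.
  by move=> /eqP ->; exact: enorm_ge0.
move/mx_norm_neq0 => [[i j] Hij]; rewrite [`|x|]Hij /= ord1; exact: enorm_coord.
Qed.

Lemma enorm_le_mxnorm x : enorm x <= n%:R * `|x|.
Proof.
rewrite -(ger0_norm (enorm_ge0 _)) -[X in _ <= X]ger0_norm ?mulr_ge0 //.
rewrite -ler_sqr ?nnegrE ?normr_ge0 // !real_normK ?num_real // enorm_sqr.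
apply: le_trans (_ : \sum_(i < n) `|x| ^+ 2 <= _).
  apply: ler_sum => i _; rewrite -real_normK ?num_real //.
  rewrite lerXn2r ?nnegrE ?normr_ge0 //.
  have : `|x ord0 i| \in [seq `|x ij.1 ij.2| | ij : 'I_1 * 'I_n].
    by apply/mapP; exists (ord0, i) => //; rewrite mem_enum.
  move=> /mapP[j _ ->]; have -> : `|x| = mx_norm x by []. rewrite mx_normrE.
  by apply/bigmax_geP; right; exists j.
rewrite sumr_const card_ord exprMn; have -> : `|x| ^+ 2 *+ n = n%:R * `|x| ^+ 2 by rewrite mulr_natl.
rewrite ler_wpM2r ?sqr_ge0 //.
by rewrite -natrX ler_nat; case: n => // m; rewrite expnS leq_pmulr.
Qed.

End Enorm.
Arguments sumsq_ge0 {R n}. Arguments enorm_ge0 {R n}. Arguments enorm_sqr {R n}.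
Arguments enorm0 {R n}. Arguments enorm_eq0 {R n}. Arguments enorm_gt0 {R n}.
Arguments enormZ {R n}. Arguments enormN {R n}. Arguments enorm_coord {R n}.
Arguments enorm_dot {R n}. Arguments enormD {R n}. Arguments enormB_ge {R n}.
Arguments enorm_dist {R n}. Arguments mxnorm_le_enorm {R n}. Arguments enorm_le_mxnorm {R n}.

Section PS.
Variable R : realType.

Lemma diffs_cvg (c : R^nat) (x z : R) : cvgn (pseries c x) -> 0 < x -> 0 <= z ->
  4 * z <= x -> cvgn (pseries (pseries_diffs c) z).
Proof.
move=> Cx x0 z0 zx.
have [K [Kreal Kf]] := cvg_series_bounded Cx.
set M := `|K + 1|.
have HM k : `|c k * x ^+ k| <= M.
  by apply: Kf => //; rewrite (lt_le_trans _ (ler_norm _))// ltrDl.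
apply: normed_cvg; rewrite /normed_series_of /=.
apply: (@series_le_cvg _ _ (geometric (M / x) (2^-1))).
- by move=> k; exact: normr_ge0.
- move=> k; rewrite /geometric /=; apply: mulr_ge0; [by rewrite divr_ge0 ?normr_ge0 ?(ltW x0) | apply: exprn_ge0; rewrite invr_ge0 //].
- move=> k; rewrite /geometric /= /pseries_diffs.
  rewrite !normrM normr_nat normrX (ger0_norm z0).
  have hc : `|c k.+1| <= M / x ^+ k.+1.
    rewrite ler_pdivlMr ?exprn_gt0 //.
    by move: (HM k.+1); rewrite normrM (ger0_norm (exprn_ge0 _ (ltW x0))).
  have hk : (k.+1%:R : R) <= 2 ^+ k.
    by rewrite -natrX ler_nat; exact: ltn_expl.
  have hz : z ^+ k <= (x / 4) ^+ k.
    by rewrite lerXn2r ?nnegrE // ?divr_ge0 ?ler_pdivlMr // ?(ltW x0) // mulrC.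
  apply: le_trans (_ : 2 ^+ k * (M / x ^+ k.+1) * (x / 4) ^+ k <= _).
    rewrite ler_pM ?mulr_ge0 ?exprn_ge0 // ?normr_ge0 //.
    by rewrite ler_pM.
  have -> : (x / 4) ^+ k = x ^+ k / (2 ^+ k * 2 ^+ k) by rewrite -exprMn -natrM expr_div_n.
  rewrite exprVn exprS le_eqVlt; apply/orP; left; apply/eqP; field.
  by rewrite !expf_neq0 // gt_eqF.
- by apply: is_cvg_geometric_series; rewrite gtr0_norm ?invr_gt0 // invf_lt1 // ltr1n.
Qed.

Lemma cont_sum (I : Type) (s : seq I) (g : I -> R -> R) x :
  (forall i, {for x, continuous (g i)}) ->
  {for x, continuous (fun y => \sum_(i <- s) g i y)}.
Proof.
move=> H; elim: s => [|a s IH].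
  have -> : (fun y => \sum_(i <- [::]) g i y) = fun _ => 0.
    by apply/funext => y; rewrite big_nil.
  exact: cst_continuous.
have -> : (fun y => \sum_(i <- a :: s) g i y) = g a + (fun y => \sum_(i <- s) g i y).
  by apply/funext => y; rewrite big_cons.
exact: (continuousD (H a) IH).
Qed.

Lemma arc_cont n (lam : R -> 'rV[R]_n) : analytic_arc lam ->
  exists (e : R) (F : R -> R), [/\ 0 < e,
    (forall t, 0 <= t <= e -> F t = enorm (lam t)),
    (forall t, 0 <= t <= e -> {for t, continuous F}),
    lam 0 = 0 & (forall s, 0 < s <= e -> lam s <> 0)].
Proof.
case=> eps [c [eps0 Hc H0 Hnz]].
pose ci (i : 'I_n) : R^nat := fun k => c k ord0 i.
have conv i t : 0 <= t < eps -> pseries (ci i) t @ \oo --> lam t ord0 i.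
  move=> /Hc Ht.
  have E : pseries (ci i) t = (fun M : 'rV[R]_n => M ord0 i) \o
             (fun N => \sum_(k < N) t ^+ k *: c k).
    apply/funext => N /=; rewrite /pseries /series /= summxE big_mkord.
    by apply: eq_bigr => k _; rewrite mxE mulrC.
  by rewrite E; apply: cvg_comp Ht _; exact: coord_continuous.
pose fi i x := limn (pseries (ci i) x).
have fiE i t : 0 <= t < eps -> fi i t = lam t ord0 i.
  by move=> /(conv i) H; apply: cvg_lim.
pose t0 := eps / 2.
have t00 : 0 < t0 by rewrite divr_gt0.
have t0e : t0 < eps by rewrite /t0 ltr_pdivrMr // ltr_pMr // ltr1n.
pose K := t0 / 16.
have K0 : 0 < K by rewrite divr_gt0.
have Ct0 i : cvgn (pseries (ci i) t0).
  by apply: cvgP; apply: conv; rewrite (ltW t00) t0e.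
have C1 i : cvgn (pseries (pseries_diffs (ci i)) (t0 / 4)).
  apply: (@diffs_cvg (ci i) t0 (t0/4) (Ct0 i)) => //; first by rewrite divr_ge0 // ltW.
  by rewrite mulrC divfK.
have C2 i : cvgn (pseries (pseries_diffs (pseries_diffs (ci i))) K).
  apply: (@diffs_cvg _ (t0/4) K (C1 i)) => //; first by rewrite divr_gt0.
    by rewrite divr_ge0 // ltW.
  by rewrite /K le_eqVlt; apply/orP; left; apply/eqP; field.
have C1' i : cvgn (pseries (pseries_diffs (ci i)) K).
  apply: (is_cvg_pseries_inside (C1 i)).
  by rewrite !gtr0_norm ?divr_gt0 // ltr_pM2l // ltf_pV2 // ?ltr_nat // posrE.
have C0 i : cvgn (pseries (ci i) K).
  apply: (is_cvg_pseries_inside (Ct0 i)).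
  by rewrite !gtr0_norm ?divr_gt0 // ltr_pdivrMr // ltr_pMr // ltr1n.
have cont i x : `|x| < K -> {for x, continuous (fi i)}.
  move=> xK.
  have D := pseries_snd_diffs (C0 i) (C1' i) (C2 i) (lt_le_trans xK (ler_norm K)).
  by apply: differentiable_continuous; apply/derivable1_diffP; by case: D.
pose e := K / 2.
have e0 : 0 < e by rewrite divr_gt0.
have eK : e < K by rewrite /e ltr_pdivrMr // ltr_pMr // ltr1n.
have Ke : K < eps.
  apply: lt_trans t0e; by rewrite /K ltr_pdivrMr // ltr_pMr // ltr1n.
exists e, (fun x => Num.sqrt (\sum_(i < n) fi i x ^+ 2)); split => //.
- move=> t /andP[t0' te]; rewrite /enorm; congr Num.sqrt; apply: eq_bigr => i _.
  by rewrite fiE // t0' (le_lt_trans te) // (lt_trans eK).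
- move=> t /andP[t0' te].
  have tK : `|t| < K by rewrite ger0_norm // (le_lt_trans te).
  apply: (@continuous_comp _ _ _ (fun x => \sum_(i < n) fi i x ^+ 2) Num.sqrt).
    apply: cont_sum => i; rewrite /=.
    have -> : (fun x => fi i x ^+ 2) = fi i \* fi i.
      by apply/funext => y; rewrite expr2.
    exact: (continuousM (cont i t tK) (cont i t tK)).
  exact: sqrt_continuous.
- move=> s /andP[s0 se]; apply: Hnz; rewrite s0 (le_lt_trans se) //.
  exact: lt_trans Ke.
Qed.
End PS.

Section C.
Variables (R : realType) (n : nat).
Implicit Types (x y p q : 'rV[R]_n).

Lemma cvg_enormP {T} {F : set_system T} {FF : Filter F} (f : T -> 'rV[R]_n) y :
  f @ F --> y <-> forall e, 0 < e -> \forall t \near F, enorm (f t - y) < e.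
Proof.
rewrite cvgrPdistC_lt; split => H e e0.
  have n1 : (0:R) < n%:R + 1 by rewrite ltr_wpDl.
  have := H (e / (n%:R + 1)) (divr_gt0 e0 n1); apply: filterS => t Ht.
  apply: le_lt_trans (enorm_le_mxnorm _) _.
  apply: le_lt_trans (_ : (n%:R + 1) * `|f t - y| < _).
    by rewrite ler_wpM2r // lerDl.
  by rewrite mulrC -ltr_pdivlMr.
by apply: filterS (H e e0) => t; apply: le_lt_trans (mxnorm_le_enorm _).
Qed.

Lemma dir0 : dir (0 : 'rV[R]_n) = 0.
Proof. by rewrite /dir scaler0. Qed.

Lemma enorm_dir x : x != 0 -> enorm (dir x) = 1.
Proof.
move=> x0; have ex := enorm_gt0 _ (elimN eqP x0).
by rewrite /dir enormZ ger0_norm ?invr_ge0 ?(ltW ex) // mulVf // gt_eqF.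
Qed.

Lemma dir_dist p q : p != 0 ->
  enorm (dir p - dir q) <= 2 * enorm (p - q) / enorm p.
Proof.
move=> p0; have ep := enorm_gt0 _ (elimN eqP p0).
have -> : dir p - dir q = (enorm p)^-1 *: (p - q) + ((enorm p)^-1 - (enorm q)^-1) *: q.
  by rewrite /dir scalerBr scalerBl addrA subrK.
apply: le_trans (enormD _ _) _.
rewrite !enormZ ger0_norm ?invr_ge0 ?(ltW ep) //.
have H2 : `|(enorm p)^-1 - (enorm q)^-1| * enorm q <= enorm (p - q) / enorm p.
  have [->|q0] := eqVneq q 0; first by rewrite enorm0 mulr0 divr_ge0 ?enorm_ge0 ?(ltW ep).
  have eq := enorm_gt0 _ (elimN eqP q0).
  have -> : (enorm p)^-1 - (enorm q)^-1 = (enorm q - enorm p) / (enorm p * enorm q).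
    by field; apply/andP; split; rewrite gt_eqF.
  rewrite normrM (gtr0_norm (_ : 0 < (enorm p * enorm q)^-1)); last by rewrite invr_gt0 mulr_gt0.
  rewrite [X in X <= _](_ : _ = `|enorm q - enorm p| / enorm p); last first.
    by field; apply/andP; split; rewrite gt_eqF.
  rewrite ler_pM2r ?invr_gt0 //.
  by apply: le_trans (enorm_dist _ _) _; rewrite -enormN opprB.
apply: le_trans (lerD (lexx _) H2) _.
by rewrite mulrC -mulrDl -mulr2n mulr_natl mulrnAl.
Qed.

Lemma tangent_eps (lam : R -> 'rV[R]_n) a0 : tangent_to lam a0 ->
  forall e, 0 < e -> exists2 eta, 0 < eta &
    forall s, 0 < s < eta -> enorm (dir (lam s) - a0) < e.
Proof.
move=> [_ /cvg_enormP H] e e0.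
have := H e e0. move=> [r /= r0 Hr].
exists r => // s /andP[s0 sr]; apply: Hr => //=.
by rewrite sub0r normrN gtr0_norm.
Qed.

End C.
Arguments cvg_enormP {R n T F FF}. Arguments dir0 {R n}. Arguments enorm_dir {R n}.
Arguments dir_dist {R n}. Arguments tangent_eps {R n}.

Section D.
Variables (R : realType) (n : nat).

Lemma small_u (d del : R) : 0 < d -> 0 < del -> exists k : nat, d / (k.+2)%:R < del.
Proof.
move=> d0 del0; exists (Num.bound (d / del)).
have := archi_boundP (ltW (divr_gt0 d0 del0)) => H.
rewrite ltr_pdivrMr ?ltr0n // mulrC -ltr_pdivrMr //.
apply: lt_trans H _; rewrite ltr_nat; by [].
Qed.

Lemma core (h : 'rV[R]_n -> 'rV[R]_n) (K1 K2 r d : R) (g1 g2 : R -> 'rV[R]_n)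
  (F1 F2 : R -> R) (a0 : 'rV[R]_n) :
  0 < K1 -> 0 < K2 -> 0 < d -> h 0 = 0 ->
  (forall x y, enorm x < r -> enorm y < r ->
     K1 * enorm (x - y) <= enorm (h x - h y) /\
     enorm (h x - h y) <= K2 * enorm (x - y)) ->
  (forall t, 0 <= t <= d -> F1 t = enorm (g1 t)) ->
  (forall t, 0 <= t <= d -> {for t, continuous F1}) ->
  (forall t, 0 <= t <= d -> F2 t = enorm (g2 t)) ->
  (forall t, 0 <= t <= d -> {for t, continuous F2}) ->
  (forall t, 0 <= t <= d -> enorm (g1 t) < r) ->
  (forall t, 0 <= t <= d -> enorm (g2 t) < r) ->
  g1 0 = 0 -> g2 0 = 0 ->
  (forall s, 0 < s <= d -> g1 s <> 0) -> (forall s, 0 < s <= d -> g2 s <> 0) ->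
  tangent_to g1 a0 -> tangent_to g2 a0 ->
  forall (am : nat -> 'rV[R]_n) (a : 'rV[R]_n),
    (forall m, arc_image h g1 d (am m)) ->
    am @ \oo --> (0 : 'rV[R]_n) ->
    @sphere R n a ->
    (fun m => dir (am m)) @ \oo --> a ->
    exists bm : nat -> 'rV[R]_n,
      [/\ (forall m, arc_image h g2 d (bm m) /\ bm m <> 0),
          bm @ \oo --> (0 : 'rV[R]_n)
        & (fun m => dir (bm m)) @ \oo --> a].
Proof.
move=> K10 K20 d0 h0 Hbl F1E F1c F2E F2c g1r g2r g10 g20 g1nz g2nz tg1 tg2
  am a Ham am0 sa dam.
have hlow x : enorm x < r -> K1 * enorm x <= enorm (h x).
  move=> xr; have r0 : 0 < r by apply: le_lt_trans xr; exact: enorm_ge0.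
  have r0' : enorm (0 : 'rV[R]_n) < r by rewrite enorm0.
  have [+ _] := Hbl x 0 xr r0'.
  by rewrite h0 !subr0.
have hup x : enorm x < r -> enorm (h x) <= K2 * enorm x.
  move=> xr; have r0 : 0 < r by apply: le_lt_trans xr; exact: enorm_ge0.
  have r0' : enorm (0 : 'rV[R]_n) < r by rewrite enorm0.
  have [_ +] := Hbl x 0 xr r0'.
  by rewrite h0 !subr0.
have /choice [tm Htm] : forall m, exists t, (0 <= t < d) /\ h (g1 t) = am m.
  move=> m; case: (Ham m) => t Ht E; exists t; split => //; by move: Ht; rewrite in_itv.
pose rho m := enorm (g1 (tm m)).
have tmd m : 0 <= tm m <= d.
  by case: (Htm m) => /andP[? ?] _; apply/andP; split => //; apply: ltW.
have rho_le m : K1 * rho m <= enorm (am m).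
  by rewrite -(Htm m).2; apply: hlow; apply: g1r.
have am0' : forall e, 0 < e -> \forall t \near \oo, enorm (am t - 0) < e by apply/cvg_enormP.
have dam' : forall e, 0 < e -> \forall t \near \oo, enorm (dir (am t) - a) < e by apply/cvg_enormP.
rewrite /sphere /= in sa.
have amnz : \forall m \near \oo, am m != 0.
  have := dam' 1 ltr01; apply: filterS => m H; apply/eqP => E; move: H.
  by rewrite E dir0 sub0r enormN sa ltxx.
have tmpos : \forall m \near \oo, 0 < tm m.
  move: amnz; apply: filterS => m Hm; have /andP[tm0 _] := tmd m.
  rewrite lt_neqAle tm0 andbT; move: Hm; apply: contraNN => /eqP E.
  by rewrite -(Htm m).2 -E g10 h0.
have rho0 e : 0 < e -> \forall m \near \oo, rho m < e.
  move=> e0; have := am0' (K1 * e) (mulr_gt0 K10 e0); apply: filterS => m.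
  rewrite subr0 => H; rewrite -(ltr_pM2l K10); exact: le_lt_trans (rho_le m) H.
have rho_pos : \forall m \near \oo, 0 < rho m.
  move: tmpos; apply: filterS => m tp; apply: enorm_gt0; apply: g1nz.
  by rewrite tp; case/andP: (tmd m).
have tm0 del : 0 < del -> \forall m \near \oo, tm m < del.
  move=> del0; case: (lerP d del) => [ddel|deld].
    by apply: nearW => m; case: (Htm m) => /andP[_ +] _; move/lt_le_trans; apply.
  have cF1 : {within `[del, d], continuous F1}.
    apply: continuous_in_subspaceT => t; rewrite inE /= in_itv /= => /andP[t1 t2].
    by apply: F1c; rewrite t2 andbT; apply: le_trans t1; exact: ltW.
  have [c cI cmin] := EVT_min (ltW deld) cF1.
  move: cI; rewrite in_itv /= => /andP[c1 c2].
  have c0 : 0 < c by apply: lt_le_trans c1.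
  have mu0 : 0 < F1 c.
    rewrite F1E ?c2 ?(ltW c0) //; apply: enorm_gt0; apply: g1nz; by rewrite c0 c2.
  move: (rho0 _ mu0); apply: filterS => m rm; rewrite ltNge; apply/negP => dt.
  have := cmin (tm m); rewrite in_itv /= dt; case/andP: (tmd m) => t1 t2.
  rewrite t2 => /(_ isT); rewrite (F1E (tm m)) ?t1 ?t2 // => H; move: rm; by rewrite ltNge H.
have tg1e := tangent_eps _ _ tg1.
have tg2e := tangent_eps _ _ tg2.
pose u (k : nat) := d / (k.+2)%:R.
have u0 k : 0 < u k by rewrite divr_gt0.
have ud k : u k < d by rewrite /u ltr_pdivrMr // ltr_pMr // ltr1n.
have u_mono k j : (k <= j)%N -> u j <= u k.
  by move=> kj; rewrite /u ler_pM2l // lef_pV2 ?posrE // ler_nat.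
have d00 : (0:R) <= 0 <= d by rewrite lexx ltW.
have F20 : F2 0 = 0 by rewrite F2E // g20 enorm0.
have F2u k : 0 < F2 (u k).
  have uk : 0 <= u k <= d by rewrite !ltW.
  rewrite F2E //; apply: enorm_gt0; apply: g2nz; by rewrite u0 ltW.
have /choice [sm Hsm] : forall m, exists s, (0 < s < d) /\
    (0 < rho m -> forall k, rho m < F2 (u k) -> s <= u k /\ F2 s = rho m).
  move=> m.
  case: (pselect (0 < rho m /\ exists k, rho m < F2 (u k))); last first.
    move=> nP; exists (d / 2); split.
      by rewrite divr_gt0 //= ltr_pdivrMr // ltr_pMr // ltr1n.
    by move=> rp k Hk; exfalso; apply: nP; split => //; exists k.
  move=> [rp [k0 Hk0]].
  have := F2c 0 d00; move/cvgrPdist_lt => /(_ _ rp) [eta /= eta0 Heta].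
  have [B HB] := small_u _ _ d0 eta0.
  have ubP k : rho m < F2 (u k) -> (k <= B)%N.
    move=> Hk; rewrite leqNgt; apply/negP => Bk.
    have : `|F2 0 - F2 (u k)| < rho m.
      apply: Heta => /=; rewrite sub0r normrN gtr0_norm //.
      apply: le_lt_trans HB; exact: u_mono (ltnW Bk).
    rewrite F20 sub0r normrN gtr0_norm // => H; move: Hk; by rewrite ltNge (ltW H).
  pose P := fun k => rho m < F2 (u k).
  case: (@ex_maxnP P B (ex_intro _ k0 Hk0) ubP) => Km HKm Kmax.
  have cF2 : {within `[0, u Km], continuous F2}.
    apply: continuous_in_subspaceT => t; rewrite inE /= in_itv /= => /andP[t1 t2].
    by apply: F2c; rewrite t1 /=; apply: le_trans t2 _; exact: ltW.
  have Hv : Num.min (F2 0) (F2 (u Km)) <= rho m <= Num.max (F2 0) (F2 (u Km)).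
    by rewrite F20 (min_l (ltW (F2u Km))) (max_r (ltW (F2u Km))) (ltW rp) (ltW HKm).
  have [s sI Fs] := IVT (ltW (u0 Km)) cF2 Hv.
  move: sI; rewrite in_itv /= => /andP[s0 sK].
  exists s; split.
    rewrite (le_lt_trans sK (ud Km)) andbT lt_neqAle s0 andbT.
    apply/eqP => E; move: Fs; rewrite -E F20 => E'; move: rp; by rewrite -E' ltxx.
  move=> _ k Hk; split => //; apply: le_trans sK _; exact: u_mono (Kmax k Hk).
pose bm m := h (g2 (sm m)).
have smd m : 0 <= sm m <= d by case: (Hsm m) => /andP[? ?] _; rewrite !ltW.
have smpos m : 0 < sm m by case: (Hsm m) => /andP[].
have Fsm : \forall m \near \oo, F2 (sm m) = rho m.
  near=> m.
  have rp : 0 < rho m by near: m; exact: rho_pos.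
  have r0 : rho m < F2 (u 0%N) by near: m; exact: rho0 _ (F2u 0%N).
  exact: ((Hsm m).2 rp 0%N r0).2.
have sm0 del : 0 < del -> \forall m \near \oo, sm m < del.
  move=> del0; have [k Hk] := small_u _ _ d0 del0.
  near=> m.
  have rp : 0 < rho m by near: m; exact: rho_pos.
  have rk : rho m < F2 (u k) by near: m; exact: rho0 _ (F2u k).
  apply: le_lt_trans Hk; exact: ((Hsm m).2 rp k rk).1.
have hb m : K1 * enorm (g2 (sm m)) <= enorm (bm m) /\
            enorm (bm m) <= K2 * enorm (g2 (sm m)).
  by split; [apply: hlow | apply: hup]; apply: g2r; apply: smd.
exists bm; split.
- move=> m; split.
    exists (sm m) => //; rewrite /= in_itv /=; case/andP: (Hsm m).1 => s0 s1.
    by rewrite (ltW s0) s1.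
  move=> E.
  have g2p : 0 < enorm (g2 (sm m)).
    by apply: enorm_gt0; apply: g2nz; rewrite smpos; case/andP: (smd m).
  have := (hb m).1; rewrite E enorm0 => H; have := mulr_gt0 K10 g2p.
  by rewrite ltNge H.
- apply/cvg_enormP => e e0; near=> m; rewrite subr0.
  have Fs : F2 (sm m) = rho m by near: m; exact: Fsm.
  have re : rho m < e / K2 by near: m; exact: rho0 _ (divr_gt0 e0 K20).
  apply: le_lt_trans (hb m).2 _; rewrite -F2E ?smd // Fs.
  by rewrite mulrC -ltr_pdivlMr.
apply/cvg_enormP => e e0.
pose C := 4 * K2 / K1 + 1.
have C0 : 0 < C by rewrite ltr_wpDl // ltW // mulr_gt0 // ?mulr_gt0 // invr_gt0.
pose eps := e / C.
have eps0 : 0 < eps by rewrite divr_gt0.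
have [eta1 eta10 T1] := tg1e eps eps0.
have [eta2 eta20 T2] := tg2e eps eps0.
near=> m.
have rp : 0 < rho m by near: m; exact: rho_pos.
have Fs : F2 (sm m) = rho m by near: m; exact: Fsm.
have tp : 0 < tm m by near: m; exact: tmpos.
have te : tm m < eta1 by near: m; exact: tm0.
have se : sm m < eta2 by near: m; exact: sm0.
have da : enorm (dir (am m) - a) < eps by near: m; exact: dam'.
have amz : am m != 0 by near: m; exact: amnz.
have ey : enorm (g2 (sm m)) = rho m by rewrite -Fs F2E.
have dx := T1 (tm m) (introT andP (conj tp te)).
have dy := T2 (sm m) (introT andP (conj (smpos m) se)).
have xy : enorm (g1 (tm m) - g2 (sm m)) <= rho m * (2 * eps).
  have -> : g1 (tm m) - g2 (sm m) = rho m *: (dir (g1 (tm m)) - dir (g2 (sm m))).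
    rewrite /dir ey -/(rho m) scalerBr !scalerA mulfV ?gt_eqF // !scale1r //.
  rewrite enormZ (ger0_norm (ltW rp)) ler_pM2l //.
  have -> : dir (g1 (tm m)) - dir (g2 (sm m)) =
     (dir (g1 (tm m)) - a0) + (a0 - dir (g2 (sm m))) by rewrite addrA subrK.
  apply: le_trans (enormD _ _) _.
  rewrite mulr_natl mulr2n lerD // ltW //.
  by rewrite -enormN opprB.
have hxy : enorm (am m - bm m) <= K2 * (rho m * (2 * eps)).
  rewrite /bm -(Htm m).2.
  have [_ H] := Hbl _ _ (g1r _ (tmd m)) (g2r _ (smd m)).
  by apply: le_trans H _; rewrite ler_wpM2l // ltW.
have amp : 0 < enorm (am m) := lt_le_trans (mulr_gt0 K10 rp) (rho_le m).
have dd : enorm (dir (am m) - dir (bm m)) <= 4 * K2 / K1 * eps.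
  apply: le_trans (dir_dist _ _ amz) _.
  rewrite ler_pdivrMr //.
  apply: le_trans (_ : 2 * (K2 * (rho m * (2 * eps))) <= _).
    by rewrite ler_pM2l.
  apply: le_trans (_ : 4 * K2 / K1 * eps * (K1 * rho m) <= _).
    rewrite le_eqVlt; apply/orP; left; apply/eqP; field.
    by rewrite gt_eqF.
  rewrite ler_pM2l ?rho_le //.
  by rewrite mulr_gt0 // mulr_gt0 // ?mulr_gt0 // invr_gt0.
have -> : dir (bm m) - a = (dir (bm m) - dir (am m)) + (dir (am m) - a).
  by rewrite addrA subrK.
apply: le_lt_trans (enormD _ _) _.
rewrite (_ : enorm (dir (bm m) - dir (am m)) = enorm (dir (am m) - dir (bm m))); last first.
  by rewrite -enormN opprB.
apply: le_lt_trans (lerD dd (lexx _)) _.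
rewrite (_ : e = 4 * K2 / K1 * eps + eps); first by rewrite ltrD2l.
rewrite /eps /C; field.
apply/andP; split; rewrite ?gt_eqF //.
by rewrite addr_gt0 // mulr_gt0.
Unshelve. all: by end_near.
Qed.
End D.

Lemma near0_bound (R : realType) (F : R -> R) (r : R) : 0 < r -> F 0 = 0 ->
  {for 0, continuous F} -> exists2 del, 0 < del & forall t, `|t| < del -> F t < r.
Proof.
move=> r0 F0 /cvgrPdist_lt /(_ _ r0) [del /= del0 H]; exists del => // t tdel.
have : `|F 0 - F t| < r by apply: H => /=; rewrite sub0r normrN.
rewrite F0 sub0r normrN; apply: le_lt_trans; exact: ler_norm.
Qed.

Theorem lemma4p8 (R : realType) (n : nat) (h : 'rV[R]_n -> 'rV[R]_n)
    (gam1 gam2 : R -> 'rV[R]_n) :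
  bilip_homeo_germ h -> analytic_arc gam1 -> analytic_arc gam2 ->
  (exists a0, tangent_to gam1 a0 /\ tangent_to gam2 a0) ->
  exists d0 : R, 0 < d0 /\
    forall d : R, 0 < d <= d0 ->
      (forall (am : nat -> 'rV[R]_n) (a : 'rV[R]_n),
         (forall m, arc_image h gam1 d (am m)) ->
         am @ \oo --> (0 : 'rV[R]_n) ->
         @sphere R n a ->
         (fun m => dir (am m)) @ \oo --> a ->
         exists bm : nat -> 'rV[R]_n,
           [/\ (forall m, arc_image h gam2 d (bm m) /\ bm m <> 0),
               bm @ \oo --> (0 : 'rV[R]_n)
             & (fun m => dir (bm m)) @ \oo --> a]) /\
      dirset (arc_image h gam1 d) = dirset (arc_image h gam2 d).
Proof.
move=> [h0 [_ [K1 [K2 [r [K10 K12 r0 Hbl]]]]]] a1 a2 [a0 [tg1 tg2]].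
have K20 : 0 < K2 by apply: lt_le_trans K12.
have [e1 [F1 [e10 F1E F1c g10 g1nz]]] := @arc_cont R n gam1 a1.
have [e2 [F2 [e20 F2E F2c g20 g2nz]]] := @arc_cont R n gam2 a2.
have z1 : (0:R) <= 0 <= e1 by rewrite lexx ltW.
have z2 : (0:R) <= 0 <= e2 by rewrite lexx ltW.
have F10 : F1 0 = 0 by rewrite F1E // g10 enorm0.
have F20 : F2 0 = 0 by rewrite F2E // g20 enorm0.
have [del1 del10 H1] := near0_bound _ _ _ r0 F10 (F1c 0 z1).
have [del2 del20 H2] := near0_bound _ _ _ r0 F20 (F2c 0 z2).
pose d0 := Num.min (Num.min e1 e2) (Num.min del1 del2 / 2).
exists d0; split.
  by rewrite !lt_min e10 e20 /= divr_gt0 // lt_min del10 del20.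
move=> d /andP[dpos dd0].
move: dd0; rewrite !le_min => /andP[/andP[de1 de2] dd].
have ddel : d < Num.min del1 del2.
  apply: le_lt_trans dd _; rewrite ltr_pdivrMr // ltr_pMr ?ltr1n //.
  by rewrite lt_min del10 del20.
move: ddel; rewrite lt_min => /andP[dd1 dd2].
have F1E' t : 0 <= t <= d -> F1 t = enorm (gam1 t).
  by case/andP => t0 td; apply: F1E; rewrite t0 (le_trans td).
have F2E' t : 0 <= t <= d -> F2 t = enorm (gam2 t).
  by case/andP => t0 td; apply: F2E; rewrite t0 (le_trans td).
have F1c' t : 0 <= t <= d -> {for t, continuous F1}.
  by case/andP => t0 td; apply: F1c; rewrite t0 (le_trans td).
have F2c' t : 0 <= t <= d -> {for t, continuous F2}.
  by case/andP => t0 td; apply: F2c; rewrite t0 (le_trans td).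
have g1r t : 0 <= t <= d -> enorm (gam1 t) < r.
  move=> /[dup] tI /andP[t0 td]; rewrite -F1E' //; apply: H1.
  by rewrite ger0_norm // (le_lt_trans td).
have g2r t : 0 <= t <= d -> enorm (gam2 t) < r.
  move=> /[dup] tI /andP[t0 td]; rewrite -F2E' //; apply: H2.
  by rewrite ger0_norm // (le_lt_trans td).
have g1nz' s : 0 < s <= d -> gam1 s <> 0.
  by case/andP => s0 sd; apply: g1nz; rewrite s0 (le_trans sd).
have g2nz' s : 0 < s <= d -> gam2 s <> 0.
  by case/andP => s0 sd; apply: g2nz; rewrite s0 (le_trans sd).
have C12 := @core R n h K1 K2 r d gam1 gam2 F1 F2 a0 K10 K20 dpos h0 Hbl
  F1E' F1c' F2E' F2c' g1r g2r g10 g20 g1nz' g2nz' tg1 tg2.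
have C21 := @core R n h K1 K2 r d gam2 gam1 F2 F1 a0 K10 K20 dpos h0 Hbl
  F2E' F2c' F1E' F1c' g2r g1r g20 g10 g2nz' g1nz' tg2 tg1.
split; first exact: C12.
apply/seteqP; split => a [sa [x [Hx x0 dx]]]; split => //.
  have [bm [Hb b0 db]] := C12 x a (fun i => (Hx i).1) x0 sa dx.
  by exists bm; split.
have [bm [Hb b0 db]] := C21 x a (fun i => (Hx i).1) x0 sa dx.
by exists bm; split.
Qed.
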